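(* In an $a^2bc$-tiling with $f$ tiles, there is a vertex containing at least two $\beta$ if and only if there is a vertex containing at least two $\gamma$, if and only if there is a vertex containing at least two $\delta$. Moreover, if none of these exist, then the only vertices of the tiling are $\alpha^{f/2}$ and $\beta\gamma\delta$.
   Context: An $a^2bc$-quadrilateral is a simple spherical quadrilateral with edges $a,a,b,c$ in cyclic order, $a,b,c$ pairwise distinct; $\alpha$ = angle between the two $a$-edges; $\beta$ = angle between an $a$-edge and the $b$-edge; $\delta$ = angle between the $b$-edge and the $c$-edge; $\gamma$ = angle between the $c$-edge and an $a$-edge. An $a^2bc$-tiling is an edge-to-edge tiling of the sphere by $f$ congruent copies of such a quadrilateral with all vertices of degree $\ge3$. A vertex $\alpha^k\beta^l\gamma^m\delta^n$ has exactly $k$ copies of $\alpha$, etc. *)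

(* Defs.v *)
From HB Require Import structures.
From mathcomp Require Import all_boot all_order all_algebra.
From mathcomp Require Import reals trigo.

Set Implicit Arguments.
Unset Strict Implicit.
Unset Printing Implicit Defensive.

Import Order.TTheory GRing.Theory Num.Theory.
Local Open Scope ring_scope.

(* Each tile has four corners k : 'I_4, in cyclic
   order around the tile:
     corner 0 = alpha (between the two a-edges),
     corner 1 = beta  (between an a-edge and the b-edge),
     corner 2 = delta (between the b-edge and the c-edge),
     corner 3 = gamma (between the c-edge and the other a-edge).
   Edge k of a tile joins corner k and corner (k+1 mod 4):
     edge 0 = a, edge 1 = b, edge 2 = c, edge 3 = a. *)

Definition alpha_i : 'I_4 := @Ordinal 4 0 isT.
Definition beta_i  : 'I_4 := @Ordinal 4 1 isT.
Definition delta_i : 'I_4 := @Ordinal 4 2 isT.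
Definition gamma_i : 'I_4 := @Ordinal 4 3 isT.

Definition edge_len (R : Type) (a b c : R) (k : 'I_4) : R :=
  match val k with 1 => b | 2 => c | _ => a end.

Definition corner_angle (R : Type) (al be ga de : R) (k : 'I_4) : R :=
  match val k with 0 => al | 1 => be | 2 => de | _ => ga end.

(* A tile-edge is named by (t, k) : 'I_f * 'I_4 (edge k of
   tile t); [glue] pairs each tile-edge with the tile-edge of the (unique)
   neighbouring tile sharing it. *)
Record a2bc_tiling (R : realType) (f : nat) (V : finType) := A2bcTiling {
  len_a : R; len_b : R; len_c : R;
  ang_al : R; ang_be : R; ang_ga : R; ang_de : R;
  vert : 'I_f -> 'I_4 -> V;
  glue : 'I_f * 'I_4 -> 'I_f * 'I_4;
  len_pos : 0 < len_a /\ 0 < len_b /\ 0 < len_c;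
  len_distinct : [/\ len_a != len_b, len_b != len_c & len_a != len_c];
  ang_range : forall k : 'I_4,
      0 < corner_angle ang_al ang_be ang_ga ang_de k < 2 * pi;
  vert_inj : forall t, injective (vert t);
  vert_surj : forall v : V, exists t k, vert t k = v;
  glue_invol : forall e, glue (glue e) = e;
  glue_other : forall e, (glue e).1 != e.1;
  glue_len : forall e,
      edge_len len_a len_b len_c (glue e).2 = edge_len len_a len_b len_c e.2;
  glue_ends : forall e,
      [set vert (glue e).1 (glue e).2; vert (glue e).1 (ordS (glue e).2)]
      = [set vert e.1 e.2; vert e.1 (ordS e.2)];
  deg_ge3 : forall v : V, (3 <= #|[set x : 'I_f * 'I_4 | vert x.1 x.2 == v]|)%N;
  vertex_sum : forall v : V,
      \sum_(x : 'I_f * 'I_4 | vert x.1 x.2 == v)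
         corner_angle ang_al ang_be ang_ga ang_de x.2 = 2 * pi;
  (* the tiling is a cell decomposition of the sphere:
     V - E + F = 2 with E = 2f edges and F = f faces *)
  euler : (#|V| + f = 2 * f + 2)%N
}.

Definition nangle (R : realType) (f : nat) (V : finType)
    (T : a2bc_tiling R f V) (v : V) (k : 'I_4) : nat :=
  #|[set x : 'I_f * 'I_4 | (vert T x.1 x.2 == v) && (x.2 == k)]|.

(* Main.v *)
Require Import Defs.
From HB Require Import structures.
From mathcomp Require Import all_boot all_order all_algebra.
From mathcomp Require Import reals trigo zify ring lra.
Set Implicit Arguments. Unset Strict Implicit. Unset Printing Implicit Defensive.
Import Order.TTheory GRing.Theory Num.Theory.

Lemma even_invol (X : finType) (g : X -> X) (A : {set X}) :
  (forall x, x \in A -> g x \in A) -> (forall x, g (g x) = x) ->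
  (forall x, g x != x) -> ~~ odd #|A|.
Proof.
move=> gA gK gN.
move: {2}#|A| (leqnn #|A|) => n; elim: n A gA => [|n IH] A gA.
  by rewrite leqn0 => /eqP ->.
case: (set_0Vmem A) => [->|[x xA]]; first by rewrite cards0.
move=> hn.
set B := A :\: [set x; g x].
have sub : [set x; g x] \subset A by apply/subsetP=> y; rewrite !inE => /orP[]/eqP->//; exact: gA.
have cB : #|A| = #|B| + 2.
  rewrite cardsD (setIidPr sub) cards2 eq_sym gN.
  have := subset_leq_card sub; rewrite cards2 eq_sym gN.
  by move=> h; rewrite subnK.
have gB : forall y, y \in B -> g y \in B.
  move=> y; rewrite !inE negb_or =>  /andP[/andP[yx ygx] yA].
  rewrite gA // andbT negb_or; apply/andP; split.
    by apply/eqP=> e; move/eqP: ygx; apply; rewrite -e gK.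
  by apply/eqP=> e; move/eqP: yx; apply; rewrite -(gK y) e gK.
rewrite cB addn2 /=  negbK.
case: n IH hn => [|n] IH hn.
  by move: hn; rewrite cB addn2.
have := IH B gB; rewrite -[odd _]negbK => ->//.
by move: hn; rewrite cB addn2 ltnS => /ltnW.
Qed.

Section S.
Variables (R : realType) (f : nat) (V : finType) (T : a2bc_tiling R f V).

Lemma sum_pair (P : 'I_f -> 'I_4 -> bool) :
  #|[set x : 'I_f * 'I_4 | P x.1 x.2]| = \sum_(t < f) \sum_(j < 4) P t j.
Proof.
rewrite -sum1dep_card pair_big /= big_mkcond /=.
by apply: eq_bigr => -[t j] _ /=; case: (P t j).
Qed.

Lemma nangleE v k : nangle T v k = \sum_(t < f) (vert T t k == v).
Proof.
rewrite /nangle (sum_pair (fun t j => (vert T t j == v) && (j == k))).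
apply: eq_bigr => t _; rewrite (bigD1 k) //= eqxx andbT big1 ?addn0 //.
by move=> j /negbTE ->; rewrite andbF.
Qed.

Lemma ordS1 : ordS beta_i = delta_i. Proof. exact: val_inj. Qed.
Lemma ordS2 : ordS delta_i = gamma_i. Proof. exact: val_inj. Qed.

Lemma glue_b e : e.2 = beta_i -> (glue T e).2 = beta_i.
Proof.
move=> he; have := glue_len T e; rewrite he.
case: (len_distinct T) => ab bc ac.
case: (glue T e) => t' [[|[|[|[|m]]]] //= hm]; rewrite /edge_len /= => h.
- by rewrite h eqxx in ab.
- exact: val_inj.
- by rewrite h eqxx in bc.
- by rewrite h eqxx in ab.
Qed.

Lemma glue_c e : e.2 = delta_i -> (glue T e).2 = delta_i.
Proof.
move=> he; have := glue_len T e; rewrite he.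
case: (len_distinct T) => ab bc ac.
case: (glue T e) => t' [[|[|[|[|m]]]] //= hm]; rewrite /edge_len /= => h.
- by rewrite h eqxx in ac.
- by rewrite h eqxx in bc.
- exact: val_inj.
- by rewrite h eqxx in ac.
Qed.
Lemma parity v k : (forall e, e.2 = k -> (glue T e).2 = k) ->
  ~~ odd (nangle T v k + nangle T v (ordS k)).
Proof.
move=> hk.
pose B := [set e : 'I_f * 'I_4 | (e.2 == k) && (v \in [set vert T e.1 e.2; vert T e.1 (ordS e.2)])].
have -> : nangle T v k + nangle T v (ordS k) = #|B|.
  rewrite /B (sum_pair (fun t j => (j == k) && (v \in [set vert T t j; vert T t (ordS j)]))).
  rewrite !nangleE -big_split /=; apply: eq_bigr => t _.
  rewrite (bigD1 k) //= eqxx /= big1 ?addn0; last by move=> j /negbTE ->.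
  rewrite !inE.
  have hne : vert T t k != vert T t (ordS k).
    apply/eqP => /vert_inj /(congr1 val) /=.
    by clear B; case: k {hk} => -[|[|[|[|m]]]] //=.
  rewrite !(eq_sym v).
  case h1: (vert T t k == v); case h2: (vert T t (ordS k) == v) => //.
  by move/eqP: h1 hne => ->; rewrite eq_sym h2.
apply: (@even_invol _ (glue T)); last 2 first.
- exact: glue_invol.
- by move=> e; apply/eqP => h; move: (glue_other T e); rewrite h eqxx.
move=> e; rewrite !inE => /andP[/eqP h1 h2].
by rewrite -in_set2 glue_ends in_set2 h2 (hk _ h1) eqxx.
Qed.
Lemma total k : \sum_(v : V) nangle T v k = f.
Proof.
under eq_bigr do rewrite nangleE.
rewrite exchange_big /= -[f in RHS]card_ord -sum1_card.
apply: eq_bigr => t _; rewrite (bigD1 (vert T t k)) //= eqxx big1 // => v.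
by rewrite eq_sym => /negbTE ->.
Qed.

Lemma eq_from (X Y : V -> nat) : (forall v, X v <= 1) ->
  (forall v, ~~ odd (X v + Y v)) -> \sum_v X v = \sum_v Y v ->
  forall v, Y v = X v.
Proof.
move=> hX hp hs.
have le : forall v, X v <= Y v.
  move=> v; move: (hX v) (hp v); case: (X v) => [|[|//]] //=.
  by case: (Y v).
move=> v; apply/eqP; rewrite eqn_leq le andbT leqNgt; apply/negP => lt.
move: hs; rewrite (bigD1 v) //= [X in _ = X](bigD1 v) //= => h.
have : \sum_(i | i != v) X i <= \sum_(i | i != v) Y i by apply: leq_sum.
by move: lt; lia.
Qed.
Local Open Scope ring_scope.
Notation ca := (corner_angle (ang_al T) (ang_be T) (ang_ga T) (ang_de T)).

Lemma sum4 (P : 'I_4 -> R) : \sum_(j < 4) P j = P alpha_i + P beta_i + P gamma_i + P delta_i.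
Proof.
rewrite (bigD1 alpha_i) // (bigD1 beta_i) // (bigD1 gamma_i) // (bigD1 delta_i) //= big1 ?addr0.
  by rewrite !addrA.
by case=> -[|[|[|[|m]]]] //= hm.
Qed.

Lemma vsum v : (nangle T v alpha_i)%:R * ang_al T + (nangle T v beta_i)%:R * ang_be T
  + (nangle T v gamma_i)%:R * ang_ga T + (nangle T v delta_i)%:R * ang_de T = 2 * pi.
Proof.
rewrite -(vertex_sum T v) big_mkcond /= -(pair_bigA _ (fun t j => if vert T t j == v then ca j else 0)) /=.
rewrite exchange_big /=.
have E : forall j, \sum_(t < f) (if vert T t j == v then ca j else 0) = (nangle T v j)%:R * ca j.
  move=> j; rewrite nangleE natr_sum mulr_suml; apply: eq_bigr => t _.
  by case: (vert T t j == v); rewrite ?mul1r ?mul0r.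
under eq_bigr do rewrite E.
rewrite sum4 /corner_angle /=.

ring.
Qed.
Lemma tsum : (f + 2)%:R * (2 * pi) = f%:R * (ang_al T + ang_be T + ang_ga T + ang_de T).
Proof.
have h : \sum_(v : V) (2 * pi) = \sum_(v : V) ((nangle T v alpha_i)%:R * ang_al T + (nangle T v beta_i)%:R * ang_be T
  + (nangle T v gamma_i)%:R * ang_ga T + (nangle T v delta_i)%:R * ang_de T).
  by apply: eq_bigr => v _; rewrite vsum.
move: h; rewrite sumr_const !big_split /= -!mulr_suml -!natr_sum !total.
have -> : #|V| = (f + 2)%N by move: (euler T); lia.
by rewrite -[(2*pi) *+ _]mulr_natl => ->; ring.
Qed.
Lemma le1_of (X : V -> nat) : ~ (exists v, (2 <= X v)%N) -> forall v, (X v <= 1)%N.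
Proof. by move=> h v; rewrite leqNgt; apply/negP => hv; apply: h; exists v. Qed.

Lemma iff_ex (X Y : V -> nat) : (forall v, ~~ odd (X v + Y v)) ->
  (\sum_v X v = f)%N -> (\sum_v Y v = f)%N ->
  (exists v, (2 <= X v)%N) -> exists v, (2 <= Y v)%N.
Proof.
move=> hp hx hy [v hv].
case: (boolP [exists v, 2 <= Y v]%N) => [/existsP//|/existsPn hn].
have hY : forall w, (Y w <= 1)%N by move=> w; rewrite leqNgt; exact: hn.
have e : X v = Y v.
  apply: (@eq_from Y X hY) => [w|]; first by rewrite addnC.
  by rewrite hy hx.
by move: hv (hY v); rewrite e; lia.
Qed.
End S.

Theorem lemma8 (R : realType) (f : nat) (V : finType) (T : a2bc_tiling R f V) :
  ((exists v : V, 2 <= nangle T v beta_i) <->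
   (exists v : V, 2 <= nangle T v gamma_i)) /\
  ((exists v : V, 2 <= nangle T v gamma_i) <->
   (exists v : V, 2 <= nangle T v delta_i)) /\
  ((~ exists v : V, 2 <= nangle T v beta_i) ->
   (~ exists v : V, 2 <= nangle T v gamma_i) ->
   (~ exists v : V, 2 <= nangle T v delta_i) ->
   forall v : V,
     [/\ (nangle T v alpha_i).*2 = f, nangle T v beta_i = 0,
         nangle T v gamma_i = 0 & nangle T v delta_i = 0]
     \/
     [/\ nangle T v alpha_i = 0, nangle T v beta_i = 1,
         nangle T v gamma_i = 1 & nangle T v delta_i = 1]).
Proof.
have pbd : forall v, ~~ odd (nangle T v beta_i + nangle T v delta_i).
  by move=> v; rewrite -ordS1; apply: parity => e; apply: glue_b.
have pdg : forall v, ~~ odd (nangle T v delta_i + nangle T v gamma_i).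
  by move=> v; rewrite -ordS2; apply: parity => e; apply: glue_c.
have pbg : forall v, ~~ odd (nangle T v beta_i + nangle T v gamma_i).
  move=> v; move: (pbd v) (pdg v); rewrite !oddD.
  by case: (odd (nangle T v beta_i)); case: (odd (nangle T v delta_i)); case: (odd (nangle T v gamma_i)).
have sym : forall X Y : V -> nat, (forall v, ~~ odd (X v + Y v)) -> forall v, ~~ odd (Y v + X v).
  by move=> X Y h v; rewrite addnC.
split; [|split].
- by split; apply: iff_ex; rewrite ?total //; apply: sym.
- by split; apply: iff_ex; rewrite ?total //; apply: sym.
move=> nb ng nd.
have hb := le1_of nb.
have egb : forall v, nangle T v gamma_i = nangle T v beta_i.
  by apply: eq_from => //; rewrite !total.
have edb : forall v, nangle T v delta_i = nangle T v beta_i.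
  by apply: eq_from => //; rewrite !total.
have : (0 < #|V|)%N by move: (euler T); lia.
case/card_gt0P => w _.
have [t0 [k0 _]] := vert_surj T w.
pose v0 := vert T t0 beta_i.
have b0 : nangle T v0 beta_i = 1%N.
  apply/eqP; rewrite eqn_leq hb /= nangleE (bigD1 t0) //= eqxx.
  by [].
have al0 : (0 < ang_al T :> R)%R.
  by have /andP[] := ang_range T alpha_i.
have hv0 := vsum T v0.
rewrite (egb v0) (edb v0) b0 in hv0.
have ht := tsum T.
have pi0 := pi_gt0 R.
have K0 : nangle T v0 alpha_i = 0%N.
  apply/eqP; rewrite -leqn0 leqNgt; apply/negP => hK.
  have hK' : (1 <= (nangle T v0 alpha_i)%:R :> R)%R by rewrite ler1n.
  set K := ((nangle T v0 alpha_i)%:R)%R in hv0 hK'.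
  have hf : (0 <= f%:R :> R)%R by [].
  rewrite natrD in ht.
  have : (f%:R * ang_al T * (1 - K) = 4 * pi :> R)%R by nra.
  have : (0 <= f%:R * ang_al T :> R)%R by apply: mulr_ge0 => //; apply: ltW.
  by nra.
rewrite K0 in hv0.
have F : (f%:R * ang_al T = 4 * pi :> R)%R by rewrite natrD in ht; nra.
move=> v; have hv := vsum T v.
rewrite (egb v) (edb v) in hv *.
have := hb v; case: (nangle T v beta_i) hv => [|[|//]] hv _.
- left; split => //.
  apply/eqP; rewrite -(eqr_nat R) -muln2 natrM.
  apply/eqP; apply: (mulIf (lt0r_neq0 al0)); rewrite F. nra.
- right; split => //.
  apply/eqP; rewrite -(eqr_nat R); apply/eqP.
  apply: (mulIf (lt0r_neq0 al0)); rewrite mul0r. nra.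
Qed.
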